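(* For each $n\in\omega$ let $\tau_n$ be the order topology on $A_n$ induced by $\leq_n$. Then in $\mathcal{N}_{\mathbb{R}}$ each space $\langle A_n,\tau_n\rangle$ is metrizable and the family $\{\langle A_n,\tau_n\rangle:n\in\omega\}$ is denumerable, but the direct sum $\bigoplus_{n\in\omega}\langle A_n,\tau_n\rangle$ is not metrizable in $\mathcal{N}_{\mathbb{R}}$. In consequence, for the metrics $d_n(a_{n,x},a_{n,y})=|x-y|$ on $A_n$, the family $\{d_n:n\in\omega\}$ does not belong to $\mathcal{N}_{\mathbb{R}}$, and $\mathbf{CSM}_{le}$ is false in $\mathcal{N}_{\mathbb{R}}$.
   Context: Permutation model $\mathcal{N}_{\mathbb{R}}$: Let $\mathcal{M}$ be a model of $\mathbf{ZFA}+\mathbf{AC}$ whose set of atoms is $A=\bigcup_{n\in\omega}A_n$, a pairwise disjoint union, where $A_n=\{a_{n,x}:x\in\mathbb{R}\}$ and $x\mapsto a_{n,x}$ is a bijection (in $\mathcal{M}$). Let $\leq_n$ be the linear order on $A_n$ given by $a_{n,x}\leq_n a_{n,y}\iff x\le y$. Let $\mathcal{G}$ be the group of all permutations $\pi$ of $A$ such that for every $n$, $\pi\upharpoonright A_n$ is an order-automorphism of $\langle A_n,\leq_n\rangle$. Let $\mathcal{I}$ be the ideal of all $E\subseteq A$ with $E\subseteq\bigcup_{n\in S}A_n$ for some finite $S\subseteq\omega$. Then $\mathcal{N}_{\mathbb{R}}$ is the class of all $x\in\mathcal{M}$ such that every $t\in\mathrm{TC}(\{x\})$ has a support $E\in\mathcal{I}$,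 i.e. every $\phi\in\mathcal{G}$ fixing $E$ pointwise satisfies $\phi(t)=t$ (permutations acting on $\mathcal{M}$ via their $\in$-automorphism extensions). $\mathbf{CSM}_{le}$: every countable direct sum of metrizable spaces is metrizable. *)

(* Defs.v *)
(* Internal (semantic) description of the permutation model N_R. *)
From Stdlib Require Import Reals List.
Open Scope R_scope.

(* Atoms: a_{n,x} is represented by the pair (n, x). *)
Definition atom : Type := (nat * R)%type.

Definition A_ (n : nat) (a : atom) : Prop := fst a = n.

Definition order_aut (f : R -> R) : Prop :=
  (forall x y, x <= y <-> f x <= f y) /\ (forall y, exists x, f x = y).

Definition inG (p : atom -> atom) : Prop :=
  exists f : nat -> R -> R, (forall n, order_aut (f n)) /\
    forall a, p a = (fst a, f (fst a) (snd a)).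

(* p fixes pointwise the support  U_{n in S} A_n  (S a finite set of indices) *)
Definition fixes (p : atom -> atom) (S : list nat) : Prop :=
  forall a, In (fst a) S -> p a = a.

(* A set of atoms U belongs to N_R (has a finite support). *)
Definition sym_set (U : atom -> Prop) : Prop :=
  exists S : list nat, forall p, inG p -> fixes p S ->
    forall a, U (p a) <-> U a.

(* A real-valued function on X x X belongs to N_R. *)
Definition sym_fun (X : atom -> Prop) (d : atom -> atom -> R) : Prop :=
  exists S : list nat, forall p, inG p -> fixes p S ->
    forall a b, X a -> X b -> d (p a) (p b) = d a b.

Definition is_metric_on (X : atom -> Prop) (d : atom -> atom -> R) : Prop :=
  (forall a b, X a -> X b -> 0 <= d a b) /\
  (forall a b, X a -> X b -> (d a b = 0 <-> a = b)) /\
  (forall a b, X a -> X b -> d a b = d b a) /\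
  (forall a b c, X a -> X b -> X c -> d a c <= d a b + d b c).

Definition metric_open (X : atom -> Prop) (d : atom -> atom -> R)
  (U : atom -> Prop) : Prop :=
  (forall a, U a -> X a) /\
  forall a, U a -> exists e, 0 < e /\ forall b, X b -> d a b < e -> U b.

(* tau_n : order topology of (A_n, <=_n) (basis: open intervals; no endpoints) *)
Definition order_open (n : nat) (U : atom -> Prop) : Prop :=
  (forall a, U a -> A_ n a) /\
  forall a, U a -> exists l u, l < snd a < u /\
    forall b, A_ n b -> l < snd b < u -> U b.

(* topology of the direct sum  (+)_n <A_n, tau_n>, carrier A = U_n A_n *)
Definition sum_open (U : atom -> Prop) : Prop :=
  forall n, order_open n (fun a => U a /\ A_ n a).

Definition allA (a : atom) : Prop := True.

(* <X, open> is metrizable in N_R: there is a metric on X lying in N_R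
   whose topology (computed in N_R, i.e. over the sets in N_R) is the
   given topology (computed in N_R). *)
Definition metrizable_in_N (X : atom -> Prop) (open : (atom -> Prop) -> Prop) : Prop :=
  exists d, sym_fun X d /\ is_metric_on X d /\
    forall U, sym_set U -> (forall a, U a -> X a) ->
      (metric_open X d U <-> open U).

(* the indexed family n |-> F n belongs to N_R and is injective (denumerable) *)
Definition denumerable_family_in_N (F : nat -> atom -> Prop) : Prop :=
  (exists S : list nat, forall p, inG p -> fixes p S ->
     forall n a, F n (p a) <-> F n a) /\
  (forall n m, (forall a, F n a <-> F m a) -> n = m).

Definition dist (a b : atom) : R := Rabs (snd a - snd b).

(* the family n |-> d_n belongs to N_R *)
Definition metric_family_in_N : Prop :=
  exists S : list nat, forall p, inG p -> fixes p S ->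
    forall n a b, A_ n a -> A_ n b -> dist (p a) (p b) = dist a b.

(* Main.v *)
Require Import Defs.
From Stdlib Require Import Reals List Lra Lia.
Open Scope R_scope.

Lemma fresh (S : list nat) : exists n, ~ In n S.
Proof.
  assert (H : exists n, forall k, In k S -> (k < n)%nat).
  { induction S as [|a S [m Hm]]; [exists 0%nat; simpl; tauto|].
    exists (Nat.max a m + 1)%nat. intros k [->|Hk]; [lia|].
    specialize (Hm k Hk); lia. }
  destruct H as [n Hn]. exists n. intro Hin. specialize (Hn n Hin). lia.
Qed.

Definition scale (n : nat) (lam : R) (a : atom) : atom :=
  if Nat.eq_dec (fst a) n then (fst a, lam * snd a) else a.

Lemma scale_inG n lam : 0 < lam -> inG (scale n lam).
Proof.
  intros Hl. exists (fun m x => if Nat.eq_dec m n then lam * x else x). split.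
  - intros m. destruct (Nat.eq_dec m n).
    + split.
      * intros x y; split; intros H.
        -- apply Rmult_le_compat_l; lra.
        -- apply (Rmult_le_reg_l lam); lra.
      * intros y. exists (y / lam). field. lra.
    + split; [tauto| intros y; exists y; reflexivity].
  - intros [m x]. unfold scale; simpl. destruct (Nat.eq_dec m n); reflexivity.
Qed.

Lemma scale_fixes n lam S : ~ In n S -> fixes (scale n lam) S.
Proof.
  intros Hn a Ha. unfold scale. destruct (Nat.eq_dec (fst a) n); [|reflexivity].
  subst. contradiction.
Qed.

Lemma inG_fst p a : inG p -> fst (p a) = fst a.
Proof. intros [f [_ Hf]]. rewrite Hf. reflexivity. Qed.

Lemma part1 n : metrizable_in_N (A_ n) (order_open n).
Proof.
  exists Defs.dist. split; [|split].
  - exists (n :: nil). intros p Hp Hf a b Ha Hb.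
    rewrite (Hf a), (Hf b); auto; unfold A_ in *; left; auto.
  - unfold Defs.dist, A_. split; [|split; [|split]].
    + intros; apply Rabs_pos.
    + intros [m x] [k y] Ha Hb; simpl in *; subst. split.
      * intros H. f_equal. revert H. unfold Rabs; destruct (Rcase_abs _); lra.
      * intros H; inversion H; subst. replace (y - y) with 0 by ring. apply Rabs_R0.
    + intros; apply Rabs_minus_sym.
    + intros a b c _ _ _. apply (R_dist_tri (snd a) (snd c) (snd b)).
  - intros U _ HU. split.
    + intros [_ H]. split; [exact HU|]. intros a Ha.
      destruct (H a Ha) as [e [He Hb]].
      exists (snd a - e), (snd a + e). split; [lra|].
      intros b Hb1 Hb2. apply Hb; auto. unfold Defs.dist. apply Rabs_def1; lra.
    + intros [_ H]. split; [exact HU|]. intros a Ha.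
      destruct (H a Ha) as [l [u [Hlu Hb]]].
      exists (Rmin (snd a - l) (u - snd a)). split.
      * apply Rmin_glb_lt; lra.
      * intros b Hb1 Hb2. apply Hb; auto. unfold Defs.dist in Hb2.
        apply Rabs_def2 in Hb2.
        pose proof (Rmin_l (snd a - l) (u - snd a)).
        pose proof (Rmin_r (snd a - l) (u - snd a)). lra.
Qed.

Lemma part2 : denumerable_family_in_N A_.
Proof.
  split.
  - exists nil. intros p Hp _ n a. unfold A_. rewrite inG_fst by auto. tauto.
  - intros n m H. specialize (H (n, 0)). unfold A_ in H; simpl in H.
    apply H; reflexivity.
Qed.

Lemma part4 : ~ metric_family_in_N.
Proof.
  intros [S HS]. destruct (fresh S) as [n Hn].
  assert (H := HS (scale n 2) (scale_inG n 2 ltac:(lra)) (scale_fixes n 2 S Hn)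
                  n (n, 0) (n, 1) eq_refl eq_refl).
  unfold Defs.dist, scale in H; simpl in H.
  destruct (Nat.eq_dec n n); [|congruence]. simpl in H.
  replace (2 * 0 - 2 * 1) with (-2) in H by ring.
  replace (0 - 1) with (-1) in H by ring.
  revert H; unfold Rabs; destruct (Rcase_abs _), (Rcase_abs _); lra.
Qed.

Lemma part3 : ~ metrizable_in_N allA sum_open.
Proof.
  intros [d [[S HS] [[Hpos [Hz _]] Hop]]].
  destruct (fresh S) as [n Hn].
  set (a0 := (n, 0) : atom).
  set (cp := d a0 (n, 1)). set (cm := d a0 (n, -1)).
  assert (Hcp : 0 < cp).
  { assert (0 <= cp) by (apply Hpos; exact I).
    destruct H; auto. exfalso. symmetry in H. apply Hz in H; [|exact I|exact I].
    unfold a0 in H. inversion H. lra. }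
  assert (Hcm : 0 < cm).
  { assert (0 <= cm) by (apply Hpos; exact I).
    destruct H; auto. exfalso. symmetry in H. apply Hz in H; [|exact I|exact I].
    unfold a0 in H. inversion H. lra. }
  assert (Hy : forall y, y <> 0 -> d a0 (n, y) >= Rmin cp cm).
  { intros y Hy0. destruct (Rlt_or_le 0 y) as [Hy|Hy].
    - assert (H := HS (scale n y) (scale_inG n y Hy) (scale_fixes n y S Hn)
                  a0 (n, 1) I I).
      unfold scale, a0 in H; simpl in H.
      destruct (Nat.eq_dec n n); [|congruence].
      replace (y * 0) with 0 in H by ring. replace (y * 1) with y in H by ring.
      fold a0 in H. rewrite H. fold cp. pose proof (Rmin_l cp cm); lra.
    - assert (Hy' : 0 < - y) by lra.
      assert (H := HS (scale n (-y)) (scale_inG n (-y) Hy') (scale_fixes n (-y) S Hn)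
                  a0 (n, -1) I I).
      unfold scale, a0 in H; simpl in H.
      destruct (Nat.eq_dec n n); [|congruence].
      replace (- y * 0) with 0 in H by ring. replace (- y * -1) with y in H by ring.
      fold a0 in H. rewrite H. fold cm. pose proof (Rmin_r cp cm); lra. }
  assert (HA : metric_open allA d (A_ n)).
  { apply Hop.
    - exists nil. intros p Hp _ a. unfold A_. rewrite inG_fst by auto. tauto.
    - intros; exact I.
    - intros m. split; [tauto|]. intros a [Ha1 Ha2].
      exists (snd a - 1), (snd a + 1). split; [lra|].
      intros b Hb _. split; auto. unfold A_ in *. congruence. }
  destruct HA as [_ HA]. destruct (HA a0 eq_refl) as [e [He Hball]].
  set (V := fun b : atom => b = a0).
  assert (HV : sum_open V).
  { apply Hop.
    - exists (n :: nil). intros p Hp Hf a. unfold V. split.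
      + intros H. assert (Hfa : fst a = n).
        { rewrite <- (inG_fst p a Hp), H. reflexivity. }
        rewrite Hf in H; auto. left; auto.
      + intros ->. apply Hf. left; reflexivity.
    - intros; exact I.
    - split; [intros; exact I|]. intros a Ha. unfold V in Ha; subst a.
      exists (Rmin e (Rmin cp cm)). split.
      + apply Rmin_glb_lt; auto. apply Rmin_glb_lt; auto.
      + intros [m y] _ Hb. unfold V.
        pose proof (Rmin_l e (Rmin cp cm)). pose proof (Rmin_r e (Rmin cp cm)).
        assert (Hm : A_ n (m, y)) by (apply Hball; [exact I|lra]).
        unfold A_ in Hm; simpl in Hm; subst m.
        destruct (Req_dec y 0) as [->|Hy0]; [reflexivity|].
        specialize (Hy y Hy0). lra. }
  destruct (HV n) as [_ H]. destruct (H a0 (conj eq_refl eq_refl)) as [l [u [Hlu Hb]]].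
  simpl in Hlu.
  destruct (Hb (n, u / 2) eq_refl) as [Hc _]; [simpl; lra|].
  unfold V, a0 in Hc. inversion Hc. lra.
Qed.

Theorem proposition3p10 :
  (forall n : nat, metrizable_in_N (A_ n) (order_open n)) /\
  denumerable_family_in_N A_ /\
  ~ metrizable_in_N allA sum_open /\
  ~ metric_family_in_N.
Proof.
  split; [exact part1|split; [exact part2|split; [exact part3|exact part4]]].
Qed.
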